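(* Let $q=1-p=o\!\left(\frac{1}{n^{1.5}}\right)$. Then for all sufficiently large $n\in\mathbb{N}$ we have $u_2(n,p)=u_2'(n,p)=3$.
   Context: $G(n,p)$ is the Erdős–Rényi random graph on $n$ labelled vertices (vertex set $V$), each edge present independently with probability $p=p(n)$; $\mathbb{P}_{n,p}$ is the corresponding probability and $q=1-p$. A diameter graph in $\mathbb{R}^d$ is a graph $(V,E)$ with $V\subset\mathbb{R}^d$ finite and $E=\{\{\mathbf{x},\mathbf{y}\}\subseteq V: |\mathbf{x}-\mathbf{y}|=\operatorname{diam}V\}$, where $\operatorname{diam}V=\max_{\mathbf{x},\mathbf{y}\in V}|\mathbf{x}-\mathbf{y}|$ (Euclidean norm); a graph is a diameter graph in $\mathbb{R}^d$ if it is isomorphic to one. $u_d(n,p)$ is the largest positive integer $k$ such that $\mathbb{P}_{n,p}\big(\exists W\subseteq V,\ |W|=k,\ G[W]$ is a diameter graph in $\mathbb{R}^d$ and $\chi(G[W])=d+1\big)>\frac12$, where $G[W]$ is the induced subgraph; if no such $k$ exists, $u_d(n,p)=0$. $u_d'(n,p)$ is defined identically with the additional requirement that $G[W]$ be connected. *)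

(* Defs.v *)
From Stdlib Require Import Reals ClassicalEpsilon.
From mathcomp Require Import all_boot.
Set Implicit Arguments. Unset Strict Implicit. Unset Printing Implicit Defensive.

(* A graph on 'I_n is its edge set: a set of 2-element subsets of 'I_n. *)
Definition pairs (n : nat) : {set {set 'I_n}} := [set e : {set 'I_n} | #|e| == 2].
Definition graphs (n : nat) : {set {set {set 'I_n}}} := powerset (pairs n).

Definition adj (n : nat) (E : {set {set 'I_n}}) (x y : 'I_n) : bool :=
  (x != y) && ([set x; y] \in E).

Definition gnp_weight (n : nat) (p : R) (E : {set {set 'I_n}}) : R :=
  Rmult (pow p #|E|) (pow (Rminus 1 p) ('C(n, 2) - #|E|)).

Definition gnp_prob (n : nat) (p : R) (A : {set {set 'I_n}} -> Prop) : R :=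
  \big[Rplus/R0]_(E in graphs n)
     (if excluded_middle_informative (A E) then gnp_weight p E else R0).

Definition eucl_dist (d : nat) (x y : 'I_d -> R) : R :=
  sqrt (\big[Rplus/R0]_(i < d) (pow (Rminus (x i) (y i)) 2)).

(* G[W] is a diameter graph in R^d: there is an injective placement f of W in R^d
   (an isomorphism of G[W] onto (f(W), E')) such that for distinct x,y in W,
   {x,y} is an edge iff |f x - f y| = diam f(W), i.e. iff |f x - f y| is at least
   every distance |f u - f v| with u,v in W. *)
Definition is_diameter_graph (d n : nat) (E : {set {set 'I_n}}) (W : {set 'I_n}) : Prop :=
  exists f : 'I_n -> ('I_d -> R),
    {in W &, injective f} /\
    forall x y, x \in W -> y \in W -> x != y ->
      (adj E x y <->
       forall u v, u \in W -> v \in W -> Rle (eucl_dist (f u) (f v)) (eucl_dist (f x) (f y))).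

Definition colorable (n : nat) (E : {set {set 'I_n}}) (W : {set 'I_n}) (k : nat) : bool :=
  [exists c : {ffun 'I_n -> 'I_k},
     [forall x in W, forall y in W, adj E x y ==> (c x != c y)]].

Definition chromatic_number_is (n : nat) (E : {set {set 'I_n}}) (W : {set 'I_n}) (k : nat) : Prop :=
  colorable E W k /\ forall j, (j < k)%N -> ~~ colorable E W j.

Definition induced_connected (n : nat) (E : {set {set 'I_n}}) (W : {set 'I_n}) : bool :=
  [forall x in W, forall y in W,
     connect (fun a b => [&& a \in W, b \in W & adj E a b]) x y].

Definition diam_event (d : nat) (conn : bool) (n k : nat) (E : {set {set 'I_n}}) : Prop :=
  exists W : {set 'I_n},
    #|W| = k /\ is_diameter_graph d E W /\ chromatic_number_is E W d.+1 /\
    (conn -> induced_connected E W).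

Definition u_value (d : nat) (conn : bool) (n : nat) (p : R) (k : nat) : Prop :=
  let good := fun j : nat => Rgt (gnp_prob p (@diam_event d conn n j)) (Rinv (IZR 2)) in
  ((0 < k)%N /\ good k /\ forall j, (k < j)%N -> ~ good j) \/
  (k = 0 /\ forall j, (0 < j)%N -> ~ good j).

Definition u_eq (d n : nat) (p : R) (k : nat) : Prop := u_value d false n p k.
Definition u'_eq (d n : nat) (p : R) (k : nat) : Prop := u_value d true n p k.

(* Main.v *)
Require Import Defs.
From Stdlib Require Import Reals.
From mathcomp Require Import all_boot.
From HB Require Import structures.
From Stdlib Require Import Lra Psatz ClassicalEpsilon Classical FunctionalExtensionality.
From mathcomp Require Import zify.
Set Implicit Arguments. Unset Strict Implicit. Unset Printing Implicit Defensive.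

Lemma Rplus_0_l' : left_id R0 Rplus. Proof. move=> x; lra. Qed.
Lemma RplusA' : associative Rplus. Proof. move=> x y z; lra. Qed.
HB.instance Definition _ := Monoid.isComLaw.Build R R0 Rplus RplusA' Rplus_comm Rplus_0_l'.
Lemma Rmult_1_l' : left_id R1 Rmult. Proof. move=> x; lra. Qed.
Lemma RmultA' : associative Rmult. Proof. move=> x y z; lra. Qed.
HB.instance Definition _ := Monoid.isComLaw.Build R R1 Rmult RmultA' Rmult_comm Rmult_1_l'.
Lemma Rmult_0_l' : left_zero R0 Rmult. Proof. move=> x; lra. Qed.
Lemma Rmult_0_r' : right_zero R0 Rmult. Proof. move=> x; lra. Qed.
HB.instance Definition _ := Monoid.isMulLaw.Build R R0 Rmult Rmult_0_l' Rmult_0_r'.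
Lemma Rmult_plus_l' : left_distributive Rmult Rplus. Proof. move=> x y z; lra. Qed.
Lemma Rmult_plus_r' : right_distributive Rmult Rplus. Proof. move=> x y z; lra. Qed.
HB.instance Definition _ := Monoid.isAddLaw.Build R Rmult Rplus Rmult_plus_l' Rmult_plus_r'.


Local Open Scope R_scope.

Lemma iter_pow k x : iter k (Rmult x) R1 = x ^ k.
Proof. by elim: k => //= k ->. Qed.

Lemma prod_const (I : finType) (A : {pred I}) x :
  \big[Rmult/R1]_(i in A) x = x ^ #|A|.
Proof. by rewrite big_const iter_pow. Qed.


Lemma prod_const_pred (I : finType) (P : pred I) x :
  \big[Rmult/R1]_(i | P i) x = x ^ #|P|.
Proof. exact: prod_const. Qed.

Lemma prod_zero (I : finType) (F : I -> R) i : F i = R0 -> \big[Rmult/R1]_i F i = R0.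
Proof. move=> h; rewrite (bigD1 i) //= h; lra. Qed.

Lemma EM_true (P : Prop) (a b : R) : P -> (if excluded_middle_informative P then a else b) = a.
Proof. by move=> h; case: excluded_middle_informative. Qed.
Lemma EM_false (P : Prop) (a b : R) : ~ P -> (if excluded_middle_informative P then a else b) = b.
Proof. by move=> h; case: excluded_middle_informative. Qed.

Lemma card_pairs n : #|pairs n| = 'C(n, 2).
Proof. by rewrite /pairs card_draws card_ord. Qed.

Lemma weight_prod n p (E : {set {set 'I_n}}) : E \subset pairs n ->
  gnp_weight p E = \big[Rmult/R1]_(i in pairs n) (if i \in E then p else 1 - p).
Proof.
move=> hE; rewrite (bigID (fun i => i \in E)).
rewrite (eq_bigr (fun _ => p)); last by move=> i /andP[_ ->].
rewrite [X in _ = _ * X](eq_bigr (fun _ => 1 - p)); last by move=> i /andP[_ /negbTE ->].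
rewrite !prod_const_pred /gnp_weight; congr (_ ^ _ * _ ^ _).
  apply: eq_card => i; rewrite [RHS]unfold_in /= ; case hi: (i \in E); last by rewrite andbF.
  by rewrite andbT (subsetP hE i hi).
have := cardsD (pairs n) E; rewrite (setIidPr hE) card_pairs => <-.
apply: eq_card => i; by rewrite [RHS]unfold_in /= !inE andbC.
Qed.

Lemma prob_ST n p (S T : {set {set 'I_n}}) : S \subset pairs n -> T \subset pairs n -> [disjoint S & T] ->
  gnp_prob p (fun E => S \subset E /\ [disjoint T & E]) = p ^ #|S| * (1-p) ^ #|T|.
Proof.
move=> hS hT hST.
pose F := fun i => if i \in pairs n then (if i \in T then 0 else p) else 0.
pose G := fun i => if i \in pairs n then (if i \in S then 0 else 1 - p) else 1.
have key : \big[Rmult/R1]_i Rplus (F i) (G i) =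
  \big[Rplus/R0]_(J in {set {set 'I_n}}) \big[Rmult/R1]_i (if i \in J then F i else G i).
  exact: bigA_distr.
have L : \big[Rmult/R1]_i Rplus (F i) (G i) = p ^ #|S| * (1-p) ^ #|T|.
  rewrite (eq_bigr (fun i => (if i \in S then p else R1) * (if i \in T then (1-p) else R1))).
    by rewrite big_split /= -!big_mkcond /= !prod_const.
  move=> i _; rewrite /F /G.
  case: (boolP (i \in S)) => hiS; case: (boolP (i \in T)) => hiT.
  - by rewrite (disjointFr hST hiS) in hiT.
  - rewrite (subsetP hS i hiS) /=; lra.
  - rewrite (subsetP hT i hiT) /=; lra.
  - case: (boolP (i \in pairs n)) => hP; rewrite ?(negbTE hP) ?hP /=; lra.
rewrite -L key /gnp_prob big_mkcond /=; apply: eq_bigr => J _.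
case: (boolP (J \in graphs n)) => hJ.
- have hJP : J \subset pairs n by rewrite /graphs powersetE in hJ.
  have [[hSJ hTJ]|hn] := classic (S \subset J /\ [disjoint T & J]).
  + rewrite EM_true // (weight_prod p hJP) big_mkcond /=; apply: eq_bigr => i _; rewrite /F /G.
    case: (boolP (i \in J)) => hiJ.
    * by rewrite (subsetP hJP i hiJ) (disjointFl hTJ hiJ).
    * case: (boolP (i \in pairs n)) => hP //.
      have -> : (i \in S) = false.
        by apply/negP => hiS; move: hiJ; rewrite (subsetP hSJ i hiS).
      done.
  + rewrite EM_false //; case: (boolP (S \subset J)) => hSJ.
    * have : ~~ [disjoint T & J] by apply/negP => h; apply: hn.
      rewrite disjoint_subset => /subsetPn [i hiT hiJ].
      have hiJ' : i \in J by move: hiJ; rewrite !inE negbK.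
      symmetry; apply: (@prod_zero _ (fun i0 => if i0 \in J then F i0 else G i0) i); rewrite hiJ' /F (subsetP hT i hiT) hiT //.
    * case/subsetPn: hSJ => i hiS hiJ.
      symmetry; apply: (@prod_zero _ (fun i0 => if i0 \in J then F i0 else G i0) i); rewrite (negbTE hiJ) /G (subsetP hS i hiS) hiS //.
- have : ~~ (J \subset pairs n) by rewrite /graphs powersetE in hJ.
  case/subsetPn => i hiJ hiP.
  symmetry; apply: (@prod_zero _ (fun i0 => if i0 \in J then F i0 else G i0) i); rewrite hiJ /F (negbTE hiP) //.
Qed.

Lemma sum_le (I : finType) (P : pred I) (f g : I -> R) :
  (forall i, P i -> f i <= g i) -> \big[Rplus/R0]_(i | P i) f i <= \big[Rplus/R0]_(i | P i) g i.
Proof. move=> h; apply: (big_ind2 (fun x y => x <= y)) => //; [lra | move=> *; lra]. Qed.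

Lemma sum_ge0 (I : finType) (P : pred I) (f : I -> R) :
  (forall i, P i -> 0 <= f i) -> 0 <= \big[Rplus/R0]_(i | P i) f i.
Proof. move=> h; apply: (big_ind (fun x => 0 <= x)) => //; [lra | move=> *; lra]. Qed.

Lemma sum_ge_term (I : finType) (f : I -> R) k :
  (forall i, 0 <= f i) -> f k <= \big[Rplus/R0]_i f i.
Proof.
move=> h; rewrite (bigD1 k) //=; have := @sum_ge0 I (fun i => i != k) f (fun i _ => h i); lra.
Qed.

Lemma weight_ge0 n p (E : {set {set 'I_n}}) : 0 <= p <= 1 -> 0 <= gnp_weight p E.
Proof. move=> hp; rewrite /gnp_weight; apply: Rmult_le_pos; apply: pow_le; lra. Qed.

Lemma prob_ge0 n p (A : {set {set 'I_n}} -> Prop) : 0 <= p <= 1 -> 0 <= gnp_prob p A.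
Proof.
move=> hp; apply: sum_ge0 => E _; case: excluded_middle_informative => ? /=; [exact: weight_ge0|lra].
Qed.

Lemma prob_le n p (A B : {set {set 'I_n}} -> Prop) : 0 <= p <= 1 ->
  (forall E, E \in graphs n -> A E -> B E) -> gnp_prob p A <= gnp_prob p B.
Proof.
move=> hp h; apply: sum_le => E hE.
have [hA|hA] := classic (A E).
- rewrite (EM_true _ _ hA) (EM_true _ _ (h E hE hA)); lra.
- rewrite (EM_false _ _ hA); case: excluded_middle_informative => ? /=; [exact: weight_ge0|lra].
Qed.

Lemma prob_union n p (K : finType) (A : {set {set 'I_n}} -> Prop) (B : K -> {set {set 'I_n}} -> Prop) :
  0 <= p <= 1 ->
  (forall E, E \in graphs n -> A E -> exists k, B k E) ->
  gnp_prob p A <= \big[Rplus/R0]_(k : K) gnp_prob p (B k).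
Proof.
move=> hp h; rewrite /gnp_prob.
rewrite [X in _ <= X]exchange_big /=.
apply: sum_le => E hE.
have [hA|hA] := classic (A E).
- have [k hk] := h E hE hA.
  apply: Rle_trans (sum_ge_term k _).
  + rewrite (EM_true _ _ hA) (EM_true _ _ hk); lra.
  + move=> i; case: excluded_middle_informative => ? /=; [exact: weight_ge0|lra].
- rewrite (EM_false _ _ hA); apply: sum_ge0 => k _; case: excluded_middle_informative => ? /=; [exact: weight_ge0|lra].
Qed.


Lemma alg (ax ay cx cy dx dy s : R) :
  ax^2+ay^2 = s -> cx^2+cy^2 = s -> dx^2+dy^2 = s ->
  (ax-cx)^2+(ay-cy)^2 = s -> (ax-dx)^2+(ay-dy)^2 = s -> (cx-dx)^2+(cy-dy)^2 <= s ->
  cx = dx /\ cy = dy.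
Proof.
move=> H1 H2 H3 H4 H5 H6.
have hs : 0 <= s by nra.
have HP : ax*cx+ay*cy = s/2 by nra.
have HQ : ax*dx+ay*dy = s/2 by nra.
set X := ax*cy - ay*cx. set Y := ax*dy - ay*dx.
have HX : X^2 = 3/4 * s^2.
  have : X^2 + (ax*cx+ay*cy)^2 = (ax^2+ay^2)*(cx^2+cy^2) by rewrite /X; ring.
  rewrite HP H1 H2; nra.
have HY : Y^2 = 3/4 * s^2.
  have : Y^2 + (ax*dx+ay*dy)^2 = (ax^2+ay^2)*(dx^2+dy^2) by rewrite /Y; ring.
  rewrite HQ H1 H3; nra.
have HI : s * ((cx-dx)^2+(cy-dy)^2) = (X - Y)^2.
  have : s * ((cx-dx)^2+(cy-dy)^2) = (ax*(cx-dx)+ay*(cy-dy))^2 + (X-Y)^2.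
    by rewrite -H1 /X /Y; ring.
  have -> : ax*(cx-dx)+ay*(cy-dy) = 0 by lra.
  lra.
have hXY : (X - Y) * (X + Y) = 0 by nra.
have [hs0|hsp] : s = 0 \/ 0 < s by lra.
- subst s.
  have hcx : cx^2 = 0 by nra. have hcy : cy^2 = 0 by nra.
  have hdx : dx^2 = 0 by nra. have hdy : dy^2 = 0 by nra.
  have : cx = 0 by nra. have : cy = 0 by nra. have : dx = 0 by nra. have : dy = 0 by nra.
  move=> *; split; lra.
- case: (Rmult_integral _ _ hXY) => h.
  + have : (cx-dx)^2+(cy-dy)^2 = 0.
      apply: (Rmult_eq_reg_l s); last by lra.
      rewrite HI; have -> : X - Y = 0 by lra. lra.
    move=> h0.
    have hx : (cx-dx)^2 = 0 by nra. have hy : (cy-dy)^2 = 0 by nra.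
    have : cx - dx = 0 by nra. have : cy - dy = 0 by nra. move=> *; split; lra.
  + have hY : Y = - X by lra.
    rewrite hY in HI.
    have : s * ((cx-dx)^2+(cy-dy)^2) = 3 * s^2 by rewrite HI; nra.
    nra.
Qed.

Definition o0 : 'I_2 := ord0.
Definition o1 : 'I_2 := lift ord0 ord0.
Definition d2 (x y : 'I_2 -> R) := (x o0 - y o0)^2 + (x o1 - y o1)^2.

Lemma d2_ge0 x y : 0 <= d2 x y.
Proof. rewrite /d2; apply: Rplus_le_le_0_compat; apply: pow2_ge_0. Qed.

Lemma dist_d2 x y : eucl_dist x y = sqrt (d2 x y).
Proof. by rewrite /eucl_dist !big_ord_recl big_ord0 /d2 Rplus_0_r. Qed.

Lemma ord2_cases (i : 'I_2) : i = o0 \/ i = o1.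
Proof. case: i => m; case: m => [|[|k]] hk; [left|right|by []]; exact: val_inj. Qed.

Lemma dist_le_d2 x y u v : eucl_dist u v <= eucl_dist x y -> d2 u v <= d2 x y.
Proof. rewrite !dist_d2 => h; apply: sqrt_le_0 => //; exact: d2_ge0. Qed.

Lemma nodiamond n (E : {set {set 'I_n}}) (W : {set 'I_n}) : is_diameter_graph 2 E W ->
  forall e a c d, e \in W -> a \in W -> c \in W -> d \in W ->
  e != a -> e != c -> e != d -> a != c -> a != d -> c != d ->
  adj E e a -> adj E e c -> adj E e d -> adj E a c -> adj E a d -> False.
Proof.
case=> f [inj hf] e a c d he ha hc hd nea nec ned nac nad ncd Hea Hec Hed Hac Had.
have M : forall x y, x \in W -> y \in W -> x != y -> adj E x y ->
    forall u v, u \in W -> v \in W -> d2 (f u) (f v) <= d2 (f x) (f y).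
  move=> x y hx hy nxy hxy u v hu hv; apply: dist_le_d2; exact: ((hf x y hx hy nxy).1 hxy u v hu hv).
have Mea := M e a he ha nea Hea. have Mec := M e c he hc nec Hec. have Med := M e d he hd ned Hed.
have Mac := M a c ha hc nac Hac. have Mad := M a d ha hd nad Had.
set s := d2 (f e) (f a).
have h1 : d2 (f e) (f c) = s by apply: Rle_antisym; [apply: Mea | apply: Mec].
have h2 : d2 (f e) (f d) = s by apply: Rle_antisym; [apply: Mea | apply: Med].
have h3 : d2 (f a) (f c) = s by apply: Rle_antisym; [apply: Mea | apply: Mac].
have h4 : d2 (f a) (f d) = s by apply: Rle_antisym; [apply: Mea | apply: Mad].
have h5 : d2 (f c) (f d) <= s by apply: Mea.
have [k0 k1] : f c o0 = f d o0 /\ f c o1 = f d o1.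
  have := @alg (f a o0 - f e o0) (f a o1 - f e o1) (f c o0 - f e o0) (f c o1 - f e o1)
     (f d o0 - f e o0) (f d o1 - f e o1) s.
  move: h1 h2 h3 h4 h5; rewrite /s /d2 => h1 h2 h3 h4 h5.
  move=> H; have [] := H; [nra|nra|nra|nra|nra|nra| move=> *; split; lra].
have hfcd : f c = f d.
  apply: functional_extensionality => i; by case: (ord2_cases i) => ->.
by move: ncd; rewrite (inj c d hc hd hfcd) eqxx.
Qed.


Lemma adjC n (E : {set {set 'I_n}}) x y : adj E x y = adj E y x.
Proof. by rewrite /adj eq_sym [ [set y; x] ]setUC. Qed.

Lemma adjxx n (E : {set {set 'I_n}}) x : adj E x x = false.
Proof. by rewrite /adj eqxx. Qed.

Ltac sv := solve [ done | by rewrite eq_sym | by rewrite adjC | by apply/negbT | by rewrite adjC; apply/negbT ].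

Ltac nd ND x y z w := first [ (apply: (ND x y z w); sv) | (apply: (ND x z y w); sv) | (apply: (ND x w y z); sv)
  | (apply: (ND y z x w); sv) | (apply: (ND y w x z); sv) | (apply: (ND z w x y); sv) ].

Lemma PM n (E : {set {set 'I_n}}) (W : {set 'I_n})
  (hG : forall v x y : 'I_n, v != x -> v != y -> x != y -> adj E v x || adj E v y)
  (hD : is_diameter_graph 2 E W) (hchi : chromatic_number_is E W 3)
  a b c d : a \in W -> b \in W -> c \in W -> d \in W ->
  a != b -> a != c -> a != d -> b != c -> b != d -> c != d ->
  ~~ adj E a b -> ~~ adj E c d -> adj E a c -> adj E a d -> adj E b c -> adj E b d -> False.
Proof.
move=> ha hb hc hd nab nac nad nbc nbd ncd Hab Hcd Hac Had Hbc Hbd.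
have ND := nodiamond hD.
have nba : b != a by rewrite eq_sym. have nca : c != a by rewrite eq_sym.
have nda : d != a by rewrite eq_sym. have ncb : c != b by rewrite eq_sym.
have ndb : d != b by rewrite eq_sym. have ndc : d != c by rewrite eq_sym.
case: (boolP (W \subset [set a; b; c; d])) => hsub.
- have := (hchi.2 2%N isT); apply/negP/negPn.
  apply/existsP; exists [ffun x => if (x == a) || (x == b) then (ord0 : 'I_2) else ord_max].
  apply/forallP => x; apply/implyP => hx; apply/forallP => y; apply/implyP => hy; apply/implyP => hxy.
  have := subsetP hsub x hx; have := subsetP hsub y hy.
  rewrite !inE !ffunE.
  move=> /orP[/orP[/orP[/eqP Ey|/eqP Ey]|/eqP Ey]|/eqP Ey] /orP[/orP[/orP[/eqP Ex|/eqP Ex]|/eqP Ex]|/eqP Ex];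
   subst x y; rewrite ?eqxx ?(negbTE nab) ?(negbTE nac) ?(negbTE nad) ?(negbTE nbc) ?(negbTE nbd) ?(negbTE ncd)
     ?(negbTE nba) ?(negbTE nca) ?(negbTE nda) ?(negbTE ncb) ?(negbTE ndb) ?(negbTE ndc) //=;
   exfalso; move: hxy; rewrite ?adjxx // ?(negbTE Hab) ?(negbTE Hcd) // adjC ?(negbTE Hab) ?(negbTE Hcd) //.
- have [z hz hz'] : exists2 z, z \in W & z \notin [set a; b; c; d] by apply/subsetPn.
  move: hz'; rewrite !inE => /norP[/norP[/norP[nza nzb] nzc] nzd].
  have g1 := hG z a b nza nzb nab. have g2 := hG z a c nza nzc nac. have g3 := hG z a d nza nzd nad.
  have g4 := hG z b c nzb nzc nbc. have g5 := hG z b d nzb nzd nbd. have g6 := hG z c d nzc nzd ncd.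
  move: g1 g2 g3 g4 g5 g6.
  case Hza: (adj E z a); case Hzb: (adj E z b); case Hzc: (adj E z c); case Hzd: (adj E z d) => //= _ _ _ _ _ _.
  all: first [ nd ND z a c d | nd ND z b c d | nd ND z a b c | nd ND z a b d ].
Qed.


Lemma pick4 n (W : {set 'I_n}) : (4 <= #|W|)%N ->
  exists a b c d, ([&& a \in W, b \in W, c \in W & d \in W] &&
   [&& a != b, a != c, a != d, b != c, b != d & c != d]).
Proof.
move=> hW.
have [a ha] : exists a, a \in W by apply/card_gt0P; lia.
have h1 := cardsD1 a W; rewrite ha in h1.
have [b] : exists b, b \in W :\ a by apply/card_gt0P; lia.
rewrite in_setD1 => /andP[nba hb].
have h2 := cardsD1 b (W :\ a); rewrite in_setD1 nba hb in h2.
have [c] : exists c, c \in W :\ a :\ b by apply/card_gt0P; lia.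
rewrite !in_setD1 => /and3P[ncb nca hc].
have h3 := cardsD1 c (W :\ a :\ b); rewrite !in_setD1 ncb nca hc in h3.
have [d] : exists d, d \in W :\ a :\ b :\ c by apply/card_gt0P; lia.
rewrite !in_setD1 => /and4P[ndc ndb nda hd].
exists a, b, c, d; rewrite ha hb hc hd /=.
by rewrite (eq_sym a b) nba (eq_sym a c) nca (eq_sym a d) nda (eq_sym b c) ncb (eq_sym b d) ndb (eq_sym c d) ndc.
Qed.

Lemma core n (E : {set {set 'I_n}}) (W : {set 'I_n})
  (hG : forall v x y : 'I_n, v != x -> v != y -> x != y -> adj E v x || adj E v y)
  (hD : is_diameter_graph 2 E W) (hchi : chromatic_number_is E W 3) : (4 <= #|W|)%N -> False.
Proof.
move=> hW; have [a [b [c [d /andP[/and4P[ha hb hc hd] /and5P[nab nac nad nbc /andP[nbd ncd]]]]]]] := pick4 hW.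
have ND := nodiamond hD.
have PM' := PM hG hD hchi.
have nba : b != a by rewrite eq_sym. have nca : c != a by rewrite eq_sym.
have nda : d != a by rewrite eq_sym. have ncb : c != b by rewrite eq_sym.
have ndb : d != b by rewrite eq_sym. have ndc : d != c by rewrite eq_sym.
have g1 := hG a b c nab nac nbc. have g2 := hG a b d nab nad nbd. have g3 := hG a c d nac nad ncd.
have g4 := hG b a c nba nbc nac. have g5 := hG b a d nba nbd nad. have g6 := hG b c d nbc nbd ncd.
have g7 := hG c a b nca ncb nab. have g8 := hG c a d nca ncd nad. have g9 := hG c b d ncb ncd nbd.
have g10 := hG d a b nda ndb nab. have g11 := hG d a c nda ndc nac. have g12 := hG d b c ndb ndc nbc.
rewrite [adj E b a]adjC in g4 g5. rewrite [adj E c a]adjC in g7 g8. rewrite [adj E c b]adjC in g7 g9.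
rewrite [adj E d a]adjC in g10 g11. rewrite [adj E d b]adjC in g10 g12. rewrite [adj E d c]adjC in g11 g12.
move: g1 g2 g3 g4 g5 g6 g7 g8 g9 g10 g11 g12.
case Hab: (adj E a b); case Hac: (adj E a c); case Had: (adj E a d);
case Hbc: (adj E b c); case Hbd: (adj E b d); case Hcd: (adj E c d) => //= _ _ _ _ _ _ _ _ _ _ _ _.
all: first [ nd ND a b c d
  | (apply: (PM' a b c d); sv) | (apply: (PM' a c b d); sv) | (apply: (PM' a d b c); sv) ].
Qed.


Definition pt0 : 'I_2 -> R := fun _ => 0.
Definition pt1 : 'I_2 -> R := fun i => if i == o0 then 1 else 0.
Definition pt2 : 'I_2 -> R := fun i => if i == o0 then /2 else sqrt 3 / 2.

Lemma o01 : (o1 == o0) = false. Proof. by []. Qed.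

Lemma sq3 : sqrt 3 * sqrt 3 = 3. Proof. apply: sqrt_sqrt; lra. Qed.

Lemma d2_01 : d2 pt0 pt1 = 1. Proof. rewrite /d2 /pt0 /pt1 eqxx o01; lra. Qed.
Lemma d2_02 : d2 pt0 pt2 = 1. Proof. rewrite /d2 /pt0 /pt2 eqxx o01 /=. have := sq3; nra. Qed.
Lemma d2_12 : d2 pt1 pt2 = 1. Proof. rewrite /d2 /pt1 /pt2 eqxx o01 /=. have := sq3; nra. Qed.
Lemma d2_xx x : d2 x x = 0. Proof. rewrite /d2; ring. Qed.
Lemma d2C x y : d2 x y = d2 y x. Proof. rewrite /d2; ring. Qed.

Lemma triangle m (conn : bool) (E : {set {set 'I_m.+3}}) :
  let x0 : 'I_m.+3 := inord 0 in let x1 : 'I_m.+3 := inord 1 in let x2 : 'I_m.+3 := inord 2 in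
  [set x0; x1] \in E -> [set x0; x2] \in E -> [set x1; x2] \in E ->
  diam_event 2 conn 3 E.
Proof.
move=> x0 x1 x2 e01 e02 e12.
have n01 : x0 != x1 by rewrite -val_eqE /= !inordK.
have n02 : x0 != x2 by rewrite -val_eqE /= !inordK.
have n12 : x1 != x2 by rewrite -val_eqE /= !inordK.
have n10 : x1 != x0 by rewrite eq_sym. have n20 : x2 != x0 by rewrite eq_sym.
have n21 : x2 != x1 by rewrite eq_sym.
set W := [set x0; x1; x2].
have memW : forall x, x \in W -> [\/ x = x0, x = x1 | x = x2].
  move=> x; rewrite !inE => /orP[/orP[/eqP->|/eqP->]|/eqP->]; by [constructor 1|constructor 2|constructor 3].
have adjall : forall x y, x \in W -> y \in W -> x != y -> adj E x y.
  move=> x y /memW[]-> /memW[]->; rewrite ?eqxx //= => _; rewrite /adj ?n01 ?n02 ?n12 ?n10 ?n20 ?n21 /=;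
  by rewrite ?e01 ?e02 ?e12 // setUC ?e01 ?e02 ?e12.
exists W; split; [|split; [|split]].
- rewrite /W setUC cardsU1 cards2 n01 !inE negb_or n20 n21 //.
- pose f := fun x : 'I_m.+3 => if x == x0 then pt0 else if x == x1 then pt1 else pt2.
  have f0 : f x0 = pt0 by rewrite /f eqxx.
  have f1 : f x1 = pt1 by rewrite /f eqxx (negbTE n10).
  have f2 : f x2 = pt2 by rewrite /f (negbTE n20) (negbTE n21).
  have dd : forall u v, u \in W -> v \in W -> d2 (f u) (f v) = if u == v then 0 else 1.
    move=> u v /memW[]-> /memW[]->; rewrite ?f0 ?f1 ?f2 ?eqxx ?d2_xx //
      ?(negbTE n01) ?(negbTE n02) ?(negbTE n12) ?(negbTE n10) ?(negbTE n20) ?(negbTE n21);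
      rewrite ?d2_01 ?d2_02 ?d2_12 // d2C ?d2_01 ?d2_02 ?d2_12 //.
  exists f; split.
  + move=> u v hu hv huv; case: (eqVneq u v) => // nuv.
    have := dd u v hu hv; rewrite huv d2_xx (negbTE nuv); lra.
  + move=> x y hx hy nxy; split=> [_|_]; last exact: adjall.
    move=> u v hu hv; rewrite !dist_d2 (dd x y hx hy) (negbTE nxy) (dd u v hu hv).
    case: (u == v); rewrite ?sqrt_0 sqrt_1; lra.
- split.
  + apply/existsP.
    exists [ffun x => if x == x0 then (@Ordinal 3 0 isT) else if x == x1 then (@Ordinal 3 1 isT) else (@Ordinal 3 2 isT)].
    apply/forallP => x; apply/implyP => hx; apply/forallP => y; apply/implyP => hy; apply/implyP => hxy.
    move: hx hy hxy => /memW[]-> /memW[]->; rewrite ?adjxx // !ffunE ?eqxx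
      ?(negbTE n01) ?(negbTE n02) ?(negbTE n12) ?(negbTE n10) ?(negbTE n20) ?(negbTE n21) => _ //.
  + move=> j hj; apply/negP => /existsP[c /forallP hc].
    have hcc : forall x y, x \in W -> y \in W -> x != y -> c x != c y.
      move=> x y hx hy nxy; have := hc x; rewrite hx /= => /forallP /(_ y); rewrite hy /= => /implyP; apply.
      exact: adjall.
    have w0 : x0 \in W by rewrite !inE eqxx.
    have w1 : x1 \in W by rewrite !inE eqxx orbT.
    have w2 : x2 \in W by rewrite !inE eqxx orbT.
    have := hcc _ _ w0 w1 n01; have := hcc _ _ w0 w2 n02; have := hcc _ _ w1 w2 n12.
    rewrite -!val_eqE /=.
    have := ltn_ord (c x0); have := ltn_ord (c x1); have := ltn_ord (c x2).
    move: (nat_of_ord (c x0)) (nat_of_ord (c x1)) (nat_of_ord (c x2)) => a b d.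
    move: hj; clear; lia.
- move=> _; apply/forallP => x; apply/implyP => hx; apply/forallP => y; apply/implyP => hy.
  case: (eqVneq x y) => [->|nxy]; first exact: connect0.
  apply: connect1; rewrite hx hy /=; exact: adjall.
Qed.


Lemma prob_false n p : gnp_prob p (fun _ : {set {set 'I_n}} => False) = 0.
Proof. rewrite /gnp_prob big1 // => E _; exact: EM_false. Qed.

Lemma iter_plus k x : iter k (Rplus x) R0 = INR k * x.
Proof. elim: k => [|k IH]; first by rewrite /=; lra. by rewrite iterS IH S_INR; lra. Qed.

Lemma pair_in n (v a : 'I_n) : v != a -> [set v; a] \in pairs n.
Proof. by move=> h; rewrite /pairs inE cards2 h. Qed.

Lemma bad_bound n p (conn : bool) j : 0 <= p <= 1 -> (4 <= j)%N ->
  gnp_prob p (@diam_event 2 conn n j) <= INR n ^ 3 * (1 - p) ^ 2.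
Proof.
move=> hp hj.
pose B := fun (k : 'I_n * 'I_n * 'I_n) (E : {set {set 'I_n}}) =>
  [&& (k.1.1 != k.1.2), (k.1.1 != k.2) & (k.1.2 != k.2)] /\
  ([set k.1.1; k.1.2] \notin E /\ [set k.1.1; k.2] \notin E).
apply: Rle_trans (prob_union (B := B) hp _) _.
- move=> E hE [W [hWc [hD [hchi _]]]]; apply: NNPP => hn.
  apply: (core (E := E) (W := W)) => //; last by rewrite hWc.
  move=> v x y nvx nvy nxy; apply/negPn/negP => h; apply: hn; exists (v, x, y).
  move/norP: h => [hx hy]; rewrite /adj nvx nvy /= in hx hy.
  by split; [rewrite /= nvx nvy nxy | split].
- apply: Rle_trans (sum_le (P := fun _ => true) (g := fun _ => (1 - p) ^ 2) _) _.
  + move=> [[v a] b] _.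
    case: (boolP [&& v != a, v != b & a != b]) => hd.
    * have hdis : [disjoint set0 & [set [set v; a]; [set v; b]]] by rewrite -setI_eq0 set0I.
      have := prob_ST p (S := set0) (T := [set [set v; a]; [set v; b]]) (sub0set _) _ hdis.
      case/and3P: hd => nva nvb nab.
      have hT : [set [set v; a]; [set v; b]] \subset pairs n.
        by apply/subsetP => e /set2P[->|->]; apply: pair_in.
      move=> /(_ hT) hST.
      have hc : #|[set [set v; a]; [set v; b]]| = 2%N.
        rewrite cards2; suff -> : [set v; a] != [set v; b] by []; apply/eqP => h.
        have : b \in [set v; b] by rewrite !inE eqxx orbT.
        by rewrite -h !inE (eq_sym b v) (negbTE nvb) (eq_sym b a) (negbTE nab).
      rewrite hc cards0 /= in hST.
      apply: Rle_trans (prob_le hp (B := fun E => set0 \subset E /\ [disjoint [set [set v; a]; [set v; b]] & E]) _) _.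
      - move=> E _ [_ [h1 h2]]; split; first exact: sub0set.
        rewrite disjoint_subset; apply/subsetP => e /set2P[->|->]; rewrite inE; [exact: h1 | exact: h2].
      - rewrite hST; lra.
    * apply: Rle_trans (prob_le hp (B := fun _ => False) _) _.
      - by move=> E _ [hh _]; move: hd; rewrite hh.
      - rewrite prob_false; apply: pow_le; lra.
  + rewrite big_const iter_plus card_prod card_prod !card_ord -!multE !mult_INR /=; lra.
Qed.


Lemma good_bound m p (conn : bool) : 0 <= p <= 1 ->
  p ^ 3 <= gnp_prob p (@diam_event 2 conn m.+3 3).
Proof.
move=> hp.
pose x0 : 'I_m.+3 := inord 0. pose x1 : 'I_m.+3 := inord 1. pose x2 : 'I_m.+3 := inord 2.
have n01 : x0 != x1 by rewrite -val_eqE /= !inordK.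
have n02 : x0 != x2 by rewrite -val_eqE /= !inordK.
have n12 : x1 != x2 by rewrite -val_eqE /= !inordK.
pose S := [set [set x0; x1]; [set x0; x2]; [set x1; x2]].
have hS : S \subset pairs m.+3.
  apply/subsetP => e /setUP[/set2P[->|->]|/set1P->]; exact: pair_in.
have hdis : [disjoint S & set0] by rewrite -setI_eq0 setI0.
have hST := prob_ST p hS (sub0set _) hdis.
rewrite cards0 /= Rmult_1_r in hST.
have hc : (#|S| <= 3)%N.
  rewrite /S cardsU cards2 cards1; case: (_ != _) => /=; lia.
apply: Rle_trans (prob_le hp (A := fun E => S \subset E /\ [disjoint set0 & E]) _).
- rewrite hST; move: hc; case: #|S| => [|[|[|[|k]]]] //= _; try nra.
- move=> E _ [hSE _]; apply: triangle; apply: (subsetP hSE); by rewrite !inE eqxx ?orbT.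
Qed.

Lemma theorem14_aux (p : nat -> R) (hp : forall n, Rle R0 (p n) /\ Rle (p n) R1)
  (hq : Un_cv (fun n => Rmult (Rminus R1 (p n)) (Rmult (INR n) (sqrt (INR n)))) R0) :
  exists N : nat, forall n : nat, (N <= n)%N ->
    u_eq 2 n (p n) 3 /\ u'_eq 2 n (p n) 3.
Proof.
have [N0 hN0] := hq (/2) ltac:(lra).
exists (maxn N0 3) => n; rewrite geq_max => /andP[hn0 hn3].
have := hN0 n (elimT leP hn0); rewrite /Rdist Rminus_0_r.
have [m ->] : exists m, n = m.+3 by exists (n - 3)%N; lia.
move=> ht.
have [hp0 hp1] := hp m.+3.
set q := 1 - p m.+3. set x := INR m.+3.
have hx3 : 3 <= x by rewrite /x !S_INR; have := pos_INR m; lra.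
have hsq1 : 1 <= sqrt x by rewrite -sqrt_1; apply: sqrt_le_1_alt; lra.
have hsq : sqrt x * sqrt x = x by apply: sqrt_sqrt; lra.
have hq0 : 0 <= q by rewrite /q; lra.
have ht' : Rabs (q * (x * sqrt x)) < /2 by exact: ht.
have hqs : q * (x * sqrt x) < /2.
  move: ht'; rewrite Rabs_right //. apply: Rle_ge; apply: Rmult_le_pos => //; nra.
have hs3 : 3 <= x * sqrt x by nra.
have hq6 : q <= /6.
  have : q * 3 <= q * (x * sqrt x) by apply: Rmult_le_compat_l.
  lra.
have hbad : x ^ 3 * q ^ 2 < /2.
  have e1 : (q * (x * sqrt x)) ^ 2 = q ^ 2 * x ^ 2 * (sqrt x * sqrt x) by ring.
  rewrite hsq in e1.
  have -> : x ^ 3 * q ^ 2 = (q * (x * sqrt x)) ^ 2 by rewrite e1; ring.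
  have : 0 <= q * (x * sqrt x) by nra. nra.
have hgood : forall conn : bool, / 2 < gnp_prob (p m.+3) (@diam_event 2 conn m.+3 3).
  move=> conn; apply: Rlt_le_trans (good_bound m conn (conj hp0 hp1)).
  have : 5/6 <= p m.+3 by rewrite /q in hq6; lra.
  move=> h; have : (5/6)^3 <= p m.+3 ^ 3 by apply: pow_incr; lra. simpl; lra.
have hbadj : forall (conn : bool) j, (3 < j)%N -> gnp_prob (p m.+3) (@diam_event 2 conn m.+3 j) <= /2.
  move=> conn j hj; apply: Rle_trans (@bad_bound m.+3 (p m.+3) conn j (conj hp0 hp1) hj) _.
  rewrite -/x -/q; lra.
split; left; (split; [done | split; [exact: hgood | ]]).
- move=> j hj hgj; have := hbadj false j hj; lra.
- move=> j hj hgj; have := hbadj true j hj; lra.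
Qed.

Local Close Scope R_scope.
Unset Implicit Arguments.

Theorem theorem14 (p : nat -> R) (hp : forall n, Rle R0 (p n) /\ Rle (p n) R1)
  (hq : Un_cv (fun n => Rmult (Rminus R1 (p n)) (Rmult (INR n) (sqrt (INR n)))) R0) :
  exists N : nat, forall n : nat, (N <= n)%N ->
    u_eq 2 n (p n) 3 /\ u'_eq 2 n (p n) 3.
Proof. exact: (@theorem14_aux p hp hq). Qed.
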